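(* Let $\lambda_1,\lambda_2\ge0$ and let $\mathbf m\in\mathcal B(\lambda+\rho)_{res}$ be the head of its resonance family $RF(\mathbf m)$. If $RF(\mathbf m)\cap\mathcal B(\lambda+\rho)=\emptyset$, then $$RF(\mathbf m)=\{f_1^{t_1}f_2^{t_2}\mathbf m:\ 0\le t_1\le s_6+1,\ 0\le t_2\le\min\{s_2,s_5\}+1\},$$ where $s_2,s_5,s_6$ are the bounding data of $\mathbf m$ (and all these iterated lowerings are nonzero).
   Context: For $\mathbf m\in\mathbb Z_{\ge0}^6$ and integers $\lambda_1,\lambda_2\ge0$: $s_1=\lambda_2+m_5+m_6-m_1-m_2-m_3$, $s_2=\lambda_2+m_5+m_6-m_2-2m_3$, $s_3=\lambda_2+m_6-m_3-m_4$, $s_4=\lambda_2+m_6-m_4-m_5$, $s_5=\lambda_2-m_5$, $s_6=\lambda_1-m_6$. $\mathcal B(\lambda+\rho)$: all $s_j\ge-1$ and $2s_3-s_4\ge-1$. $\mathcal B(\lambda+\rho)_{res}$: $m_3=m_5$, $s_j\ge-1$ for $j\in\{1,2,5,6\}$, $s_3=s_4\le0$ even; decoration $d(\mathbf m)=-s_3/2$. Weight $k(\mathbf m)=(m_2+3m_3+2m_4+3m_5+m_6,\ m_1+m_2+2m_3+m_4+m_5)$. Arrays $\left[\begin{smallmatrix}a&b&c&b&d\\&x&y&z&\\&&k&&\end{smallmatrix}\right]$ (entries in $\mathbb Z_{\ge0}$) with operators: $e_1$: $(a,c,d;y;k)\mapsto(a-1,c+1,d-1;y+1;k+1)$, zero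 if $\min\{a,d\}=0$; $e_2$: $(b,c;x,z;k)\mapsto(b-1,c+3;x+1,z+1;k+1)$, zero if $b=0$; $f_1$: $(a,c,d;y;k)\mapsto(a+1,c-1,d+1;y-1;k-1)$, zero if $\min\{c,y,k\}=0$; $f_2$: $(b,c;x,z;k)\mapsto(b+1,c-3;x-1,z-1;k-1)$, zero if $\min\{x,z,k\}=0$ or $c<3$ (unlisted entries unchanged; both copies of $b$ change together). $A(\mathbf m)=\left[\begin{smallmatrix}m_2&m_5&m_4&m_5&m_6\\&s_2+1&s_6+1&s_5+1&\\&&d(\mathbf m)&&\end{smallmatrix}\right]$. On Lusztig data, $f_1(\mathbf m)=(m_1,m_2+1,m_3,m_4-1,m_5,m_6+1)$ and $f_2(\mathbf m)=(m_1,m_2,m_3+1,m_4-3,m_5+1,m_6)$, defined (nonzero) exactly when $f_i(A(\mathbf m))\ne0$, and $e_1(\mathbf m)=(m_1,m_2-1,m_3,m_4+1,m_5,m_6-1)$, $e_2(\mathbf m)=(m_1,m_2,m_3-1,m_4+3,m_5-1,m_6)$ likewise. For an array $A$, $\epsilon_i(A)=\max\{n\ge0:e_i^n(A)\ne0\}$ and $\mathrm{hd}(A)=e_1^{\epsilon_1(A)}e_2^{\epsilon_2(A)}(A)$. On $\mathcal B(\lambda+\rho)_{res}$, $\mathbf m\sim\mathbf n$ iff $k(\mathbf m)=k(\mathbf n)$ and $\mathrm{hd}(A(\mathbf m))=\mathrm{hd}(A(\mathbf n))$; the equivalence class of $\mathbf m$ is its resonance family $RF(\mathbf m)$. The head of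 a resonance family is its unique element $\mathbf n$ with $A(\mathbf n)=\mathrm{hd}(A(\mathbf n))$; it has the form $(n_1,0,0,n_4,0,0)$, $(n_1,n_2,0,n_4,0,0)$ or $(n_1,0,0,n_4,0,n_6)$. *)

(* Defs.v *)
From Stdlib Require Import ZArith Arith Lia.
Open Scope Z_scope.

Record Ldat := mkL { m1 : nat; m2 : nat; m3 : nat; m4 : nat; m5 : nat; m6 : nat }.

Section Bounding.
Variables (l1 l2 : nat).
Definition L1 := Z.of_nat l1.
Definition L2 := Z.of_nat l2.
Definition s1 (m : Ldat) : Z :=
  L2 + Z.of_nat (m5 m) + Z.of_nat (m6 m) - Z.of_nat (m1 m) - Z.of_nat (m2 m) - Z.of_nat (m3 m).
Definition s2 (m : Ldat) : Z :=
  L2 + Z.of_nat (m5 m) + Z.of_nat (m6 m) - Z.of_nat (m2 m) - 2 * Z.of_nat (m3 m).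
Definition s3 (m : Ldat) : Z := L2 + Z.of_nat (m6 m) - Z.of_nat (m3 m) - Z.of_nat (m4 m).
Definition s4 (m : Ldat) : Z := L2 + Z.of_nat (m6 m) - Z.of_nat (m4 m) - Z.of_nat (m5 m).
Definition s5 (m : Ldat) : Z := L2 - Z.of_nat (m5 m).
Definition s6 (m : Ldat) : Z := L1 - Z.of_nat (m6 m).

Definition inB (m : Ldat) : Prop :=
  -1 <= s1 m /\ -1 <= s2 m /\ -1 <= s3 m /\ -1 <= s4 m /\ -1 <= s5 m /\ -1 <= s6 m
  /\ -1 <= 2 * s3 m - s4 m.

Definition inBres (m : Ldat) : Prop :=
  m3 m = m5 m /\ -1 <= s1 m /\ -1 <= s2 m /\ -1 <= s5 m /\ -1 <= s6 m
  /\ s3 m = s4 m /\ s3 m <= 0 /\ Z.Even (s3 m).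

(* decoration d(m) = -s3/2 (a nonnegative integer on B_res) *)
Definition deco (m : Ldat) : Z := - (s3 m / 2).
End Bounding.

Definition wt (m : Ldat) : nat * nat :=
  ((m2 m + 3 * m3 m + 2 * m4 m + 3 * m5 m + m6 m)%nat,
   (m1 m + m2 m + 2 * m3 m + m4 m + m5 m)%nat).

(* Arrays [a b c b d ; x y z ; k] with entries in Z_{>=0} (b stored once) *)
Record Arr := mkA { aa : nat; ab : nat; ac : nat; ad : nat;
                    ax : nat; ay : nat; az : nat; ak : nat }.

(* operators on arrays; None stands for 0 *)
Definition e1A (A : Arr) : option Arr :=
  if (Nat.eqb (Nat.min (aa A) (ad A)) 0) then None
  else Some (mkA (aa A - 1) (ab A) (ac A + 1) (ad A - 1) (ax A) (ay A + 1) (az A) (ak A + 1)).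
Definition e2A (A : Arr) : option Arr :=
  if Nat.eqb (ab A) 0 then None
  else Some (mkA (aa A) (ab A - 1) (ac A + 3) (ad A) (ax A + 1) (ay A) (az A + 1) (ak A + 1)).
Definition f1A (A : Arr) : option Arr :=
  if Nat.eqb (Nat.min (ac A) (Nat.min (ay A) (ak A))) 0 then None
  else Some (mkA (aa A + 1) (ab A) (ac A - 1) (ad A + 1) (ax A) (ay A - 1) (az A) (ak A - 1)).
Definition f2A (A : Arr) : option Arr :=
  if orb (Nat.eqb (Nat.min (ax A) (Nat.min (az A) (ak A))) 0) (Nat.ltb (ac A) 3) then None
  else Some (mkA (aa A) (ab A + 1) (ac A - 3) (ad A) (ax A - 1) (ay A) (az A - 1) (ak A - 1)).

Fixpoint iterO {T : Type} (f : T -> option T) (n : nat) (x : T) : option T :=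
  match n with
  | O => Some x
  | S n' => match iterO f n' x with Some y => f y | None => None end
  end.

(* A(m); entries s_j+1 and d(m) are nonnegative on B_res *)
Definition Aof (l1 l2 : nat) (m : Ldat) : Arr :=
  mkA (m2 m) (m5 m) (m4 m) (m6 m)
      (Z.to_nat (s2 l2 m + 1)) (Z.to_nat (s6 l1 m + 1)) (Z.to_nat (s5 l2 m + 1))
      (Z.to_nat (deco l2 m)).

Definition f1L (l1 l2 : nat) (m : Ldat) : option Ldat :=
  match f1A (Aof l1 l2 m) with
  | Some _ => Some (mkL (m1 m) (m2 m + 1) (m3 m) (m4 m - 1) (m5 m) (m6 m + 1))
  | None => None end.
Definition f2L (l1 l2 : nat) (m : Ldat) : option Ldat :=
  match f2A (Aof l1 l2 m) with
  | Some _ => Some (mkL (m1 m) (m2 m) (m3 m + 1) (m4 m - 3) (m5 m + 1) (m6 m))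
  | None => None end.

Definition is_eps (e : Arr -> option Arr) (A : Arr) (n : nat) : Prop :=
  iterO e n A <> None /\ (forall n', iterO e n' A <> None -> (n' <= n)%nat).

Definition is_hd (A H : Arr) : Prop :=
  exists n1 n2 X, is_eps e1A A n1 /\ is_eps e2A A n2 /\
    iterO e2A n2 A = Some X /\ iterO e1A n1 X = Some H.

Definition res_equiv (l1 l2 : nat) (m n : Ldat) : Prop :=
  wt m = wt n /\ exists H, is_hd (Aof l1 l2 m) H /\ is_hd (Aof l1 l2 n) H.

Definition inRF (l1 l2 : nat) (m n : Ldat) : Prop :=
  inBres l1 l2 n /\ res_equiv l1 l2 m n.

Definition is_head (l1 l2 : nat) (m : Ldat) : Prop :=
  inBres l1 l2 m /\ is_hd (Aof l1 l2 m) (Aof l1 l2 m).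

(* Main.v *)
Require Import Defs.
From Stdlib Require Import ZArith Lia Bool.
Open Scope Z_scope.

Definition st (m : Ldat) (i j : nat) : Ldat :=
  mkL (m1 m) (m2 m + i) j (m4 m - i - 3 * j) j (m6 m + i).

Definition Hd (l1 l2 : nat) (m : Ldat) : Prop :=
  m3 m = 0%nat /\ m5 m = 0%nat /\ (m2 m = 0%nat \/ m6 m = 0%nat) /\ inBres l1 l2 m.

Definition Inv (l1 l2 : nat) (m : Ldat) (i j : nat) : Prop :=
  (i + 3 * j <= m4 m)%nat /\ 0 <= deco l2 m - Z.of_nat i - Z.of_nat j /\
  -1 <= s6 l1 m - Z.of_nat i /\ -1 <= s2 l2 m - Z.of_nat j /\ -1 <= s5 l2 m - Z.of_nat j.

Ltac unf2 := unfold Hd, Inv, inBres, inB, st in *; unfold s1, s2, s3, s4, s5, s6, L1, L2 in *; cbn [m1 m2 m3 m4 m5 m6] in *.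
Ltac unf := unfold Hd, Inv, inBres, inB, st, deco in *; unfold s1, s2, s3, s4, s5, s6, deco, L1, L2 in *; cbn [m1 m2 m3 m4 m5 m6] in *.

Lemma deco_st l1 l2 m i j : Hd l1 l2 m -> (i + 3 * j <= m4 m)%nat ->
  deco l2 (st m i j) = deco l2 m - Z.of_nat i - Z.of_nat j.
Proof.
  intros H Hi. unf. destruct H as (H3 & H5 & _ & _ & _ & _ & _ & _ & _ & _ & [q Hq]).
  Z.div_mod_to_equations. lia.
Qed.

Lemma f2L_st l1 l2 m i j : Hd l1 l2 m -> Inv l1 l2 m i j ->
  (f2L l1 l2 (st m i j) <> None <-> (0 <= s2 l2 m - Z.of_nat j /\ 0 <= s5 l2 m - Z.of_nat j /\
     1 <= deco l2 m - Z.of_nat i - Z.of_nat j /\ (i + 3 * j + 3 <= m4 m)%nat)) /\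
  (f2L l1 l2 (st m i j) <> None -> f2L l1 l2 (st m i j) = Some (st m i (S j))).
Proof.
  intros H HI. pose proof (deco_st l1 l2 m i j H (proj1 HI)) as Hd.
  unfold f2L, f2A, Aof. cbn [aa ab ac ad ax ay az ak]. rewrite Hd.
  destruct (orb _ _) eqn:E.
  - rewrite orb_true_iff, Nat.eqb_eq, Nat.ltb_lt in E. split; [|congruence].
    split; [congruence|]. intros HP. exfalso. unf2. lia.
  - rewrite orb_false_iff, Nat.eqb_neq, Nat.ltb_ge in E. split.
    + split; [intros _; unf2; lia|congruence].
    + intros _. f_equal. unf2. f_equal; lia.
Qed.

Lemma f1L_st l1 l2 m i j : Hd l1 l2 m -> Inv l1 l2 m i j ->
  (f1L l1 l2 (st m i j) <> None <-> (0 <= s6 l1 m - Z.of_nat i /\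
     1 <= deco l2 m - Z.of_nat i - Z.of_nat j /\ (i + 3 * j + 1 <= m4 m)%nat)) /\
  (f1L l1 l2 (st m i j) <> None -> f1L l1 l2 (st m i j) = Some (st m (S i) j)).
Proof.
  intros H HI. pose proof (deco_st l1 l2 m i j H (proj1 HI)) as Hd.
  unfold f1L, f1A, Aof. cbn [aa ab ac ad ax ay az ak]. rewrite Hd.
  destruct (Nat.eqb _ _) eqn:E.
  - rewrite Nat.eqb_eq in E. split; [|congruence].
    split; [congruence|]. intros HP. exfalso. unf2. lia.
  - rewrite Nat.eqb_neq in E. split.
    + split; [intros _; unf2; lia|congruence].
    + intros _. f_equal. unf2. f_equal; lia.
Qed.

Lemma iter_e1 : forall n A B, iterO e1A n A = Some B ->
  (n <= Nat.min (aa A) (ad A))%nat /\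
  B = mkA (aa A - n) (ab A) (ac A + n) (ad A - n) (ax A) (ay A + n) (az A) (ak A + n).
Proof.
  induction n; intros A B H.
  - simpl in H. injection H as <-. split; [lia|]. destruct A; simpl; f_equal; lia.
  - simpl in H. destruct (iterO e1A n A) as [y|] eqn:Ey; [|discriminate].
    destruct (IHn A y Ey) as [Hn ->].
    unfold e1A in H. cbn [aa ab ac ad ax ay az ak] in H.
    destruct (Nat.eqb _ _) eqn:E; [discriminate|]. rewrite Nat.eqb_neq in E.
    injection H as <-. split; [lia|]. f_equal; lia.
Qed.

Lemma iter_e1_def : forall n A, (n <= Nat.min (aa A) (ad A))%nat -> iterO e1A n A <> None.
Proof.
  induction n; intros A H; simpl; [congruence|].
  destruct (iterO e1A n A) as [y|] eqn:Ey; [|exfalso; apply (IHn A); [lia|auto]].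
  destruct (iter_e1 n A y Ey) as [_ ->]. unfold e1A; cbn [aa ab ac ad ax ay az ak].
  destruct (Nat.eqb _ _) eqn:E; [rewrite Nat.eqb_eq in E; lia|congruence].
Qed.

Lemma iter_e2 : forall n A B, iterO e2A n A = Some B ->
  (n <= ab A)%nat /\
  B = mkA (aa A) (ab A - n) (ac A + 3 * n) (ad A) (ax A + n) (ay A) (az A + n) (ak A + n).
Proof.
  induction n; intros A B H.
  - simpl in H. injection H as <-. split; [lia|]. destruct A; simpl; f_equal; lia.
  - simpl in H. destruct (iterO e2A n A) as [y|] eqn:Ey; [|discriminate].
    destruct (IHn A y Ey) as [Hn ->].
    unfold e2A in H. cbn [aa ab ac ad ax ay az ak] in H.
    destruct (Nat.eqb _ _) eqn:E; [discriminate|]. rewrite Nat.eqb_neq in E.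
    injection H as <-. split; [lia|]. f_equal; lia.
Qed.

Lemma iter_e2_def : forall n A, (n <= ab A)%nat -> iterO e2A n A <> None.
Proof.
  induction n; intros A H; simpl; [congruence|].
  destruct (iterO e2A n A) as [y|] eqn:Ey; [|exfalso; apply (IHn A); [lia|auto]].
  destruct (iter_e2 n A y Ey) as [_ ->]. unfold e2A; cbn [aa ab ac ad ax ay az ak].
  destruct (Nat.eqb _ _) eqn:E; [rewrite Nat.eqb_eq in E; lia|congruence].
Qed.

Lemma s3_deco l1 l2 m : Hd l1 l2 m -> s3 l2 m = -2 * deco l2 m.
Proof.
  intros H. pose proof H as H'. unf. destruct H as (H3 & H5 & _ & _ & _ & _ & _ & _ & _ & _ & [q Hq]).
  Z.div_mod_to_equations. lia.
Qed.

Lemma st00 l1 l2 m : Hd l1 l2 m -> st m 0 0 = m.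
Proof. intros (H3 & H5 & _). destruct m; unfold st; simpl in *; f_equal; lia. Qed.

Definition G l1 l2 m i j :=
  match iterO (f2L l1 l2) j m with Some y => iterO (f1L l1 l2) i y | None => None end.

Lemma G_S l1 l2 m i j : G l1 l2 m (S i) j =
  match G l1 l2 m i j with Some y => f1L l1 l2 y | None => None end.
Proof. unfold G. destruct (iterO (f2L l1 l2) j m); reflexivity. Qed.

Lemma G_0S l1 l2 m j : G l1 l2 m 0 (S j) =
  match G l1 l2 m 0 j with Some y => f2L l1 l2 y | None => None end.
Proof. unfold G. simpl. destruct (iterO (f2L l1 l2) j m) as [l|]; [destruct (f2L l1 l2 l)|]; reflexivity. Qed.

Lemma G_some l1 l2 m : Hd l1 l2 m -> forall j i n, G l1 l2 m i j = Some n ->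
  n = st m i j /\ Inv l1 l2 m i j.
Proof.
  intros H. induction j; induction i; intros n Hn.
  - unfold G in Hn. simpl in Hn. injection Hn as <-. rewrite (st00 l1 l2 m H).
    split; auto. pose proof (s3_deco l1 l2 m H). unf2. lia.
  - rewrite G_S in Hn. destruct (G l1 l2 m i 0) as [y|] eqn:Ey; [|discriminate].
    destruct (IHi y eq_refl) as [-> HI].
    destruct (f1L_st l1 l2 m i 0 H HI) as [C1 C2].
    assert (Hne : f1L l1 l2 (st m i 0) <> None) by congruence.
    rewrite (C2 Hne) in Hn. injection Hn as <-. split; auto.
    apply C1 in Hne. unf2. lia.
  - rewrite G_0S in Hn. destruct (G l1 l2 m 0 j) as [y|] eqn:Ey; [|discriminate].
    destruct (IHj 0%nat y Ey) as [-> HI].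
    destruct (f2L_st l1 l2 m 0 j H HI) as [C1 C2].
    assert (Hne : f2L l1 l2 (st m 0 j) <> None) by congruence.
    rewrite (C2 Hne) in Hn. injection Hn as <-. split; auto.
    apply C1 in Hne. unf2. lia.
  - rewrite G_S in Hn. destruct (G l1 l2 m i (S j)) as [y|] eqn:Ey; [|discriminate].
    destruct (IHi y eq_refl) as [-> HI].
    destruct (f1L_st l1 l2 m i (S j) H HI) as [C1 C2].
    assert (Hne : f1L l1 l2 (st m i (S j)) <> None) by congruence.
    rewrite (C2 Hne) in Hn. injection Hn as <-. split; auto.
    apply C1 in Hne. unf2. lia.
Qed.

Lemma hd_st l1 l2 m i j : Hd l1 l2 m -> Inv l1 l2 m i j ->
  is_hd (Aof l1 l2 (st m i j)) (Aof l1 l2 m).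
Proof.
  intros H HI. pose proof (deco_st l1 l2 m i j H (proj1 HI)) as HD.
  assert (Hmin : Nat.min (aa (Aof l1 l2 (st m i j))) (ad (Aof l1 l2 (st m i j))) = i).
  { unfold Aof, st; cbn [aa ad m2 m6]. destruct H as (_ & _ & Hm & _). lia. }
  assert (Hb : ab (Aof l1 l2 (st m i j)) = j) by reflexivity.
  set (A := Aof l1 l2 (st m i j)) in *.
  destruct (iterO e2A j A) as [X|] eqn:EX; [|exfalso; apply (iter_e2_def j A); [lia|auto]].
  destruct (iter_e2 j A X EX) as [_ HX].
  destruct (iterO e1A i X) as [Y|] eqn:EY;
    [|exfalso; apply (iter_e1_def i X); [subst X; cbn [aa ad]; lia|auto]].
  destruct (iter_e1 i X Y EY) as [_ HY].
  exists i, j, X. split; [|split; [|split]].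
  - split; [apply iter_e1_def; lia|].
    intros n' Hn'. destruct (iterO e1A n' A) as [B|] eqn:EB; [|congruence].
    destruct (iter_e1 n' A B EB). lia.
  - split; [apply iter_e2_def; lia|].
    intros n' Hn'. destruct (iterO e2A n' A) as [B|] eqn:EB; [|congruence].
    destruct (iter_e2 n' A B EB). lia.
  - exact EX.
  - rewrite EY. f_equal. rewrite HY, HX. subst A. unfold Aof. cbn [aa ab ac ad ax ay az ak]. rewrite HD.
    pose proof (s3_deco l1 l2 m H). unf2. f_equal; lia.
Qed.

Lemma inRF_st l1 l2 m i j : Hd l1 l2 m -> Inv l1 l2 m i j -> inRF l1 l2 m (st m i j).
Proof.
  intros H HI. pose proof (deco_st l1 l2 m i j H (proj1 HI)) as HD.
  pose proof (s3_deco l1 l2 m H) as HS.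
  split; [|split].
  - assert (Hs3 : s3 l2 (st m i j) = -2 * deco l2 (st m i j)).
    { rewrite HD, <- (Z.mul_1_l (s3 l2 (st m i j))). unf2. lia. }
    assert (Hev : Z.Even (s3 l2 (st m i j))) by (exists (- deco l2 (st m i j)); lia).
    revert Hs3 Hev. rewrite HD. unf2. intros. repeat split; try lia. exact Hev.
  - unfold wt, st; cbn [m1 m2 m3 m4 m5 m6]. destruct H as (H3 & H5 & _). destruct HI as (Hi & _).
    f_equal; lia.
  - exists (Aof l1 l2 m). split; [|apply hd_st; auto].
    destruct H as (H3 & H5 & Hm & _).
    exists 0%nat, 0%nat, (Aof l1 l2 m). split; [|split; [|split]]; try reflexivity.
    + split; [simpl; congruence|]. intros n' Hn'.
      destruct (iterO e1A n' (Aof l1 l2 m)) as [B|] eqn:EB; [|congruence].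
      destruct (iter_e1 _ _ _ EB). unfold Aof in *; cbn [aa ad] in *. lia.
    + split; [simpl; congruence|]. intros n' Hn'.
      destruct (iterO e2A n' (Aof l1 l2 m)) as [B|] eqn:EB; [|congruence].
      destruct (iter_e2 _ _ _ EB). unfold Aof in *; cbn [ab] in *. lia.
Qed.

Lemma inB_st l1 l2 m i j : Hd l1 l2 m -> Inv l1 l2 m i j ->
  deco l2 m - Z.of_nat i - Z.of_nat j = 0 -> inB l1 l2 (st m i j).
Proof.
  intros H HI H0. pose proof (s3_deco l1 l2 m H) as HS. unf2. lia.
Qed.

Lemma head_Hd l1 l2 m : is_head l1 l2 m -> Hd l1 l2 m.
Proof.
  intros [HB (n1 & n2 & X & [E1a E1b] & [E2a E2b] & EX & EY)].
  destruct (iter_e2 _ _ _ EX) as [Hn2 HX]. destruct (iter_e1 _ _ _ EY) as [Hn1 HY].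
  pose proof (f_equal ak HY) as K. rewrite HX in K. cbn [ak] in K.
  assert (n1 = 0%nat /\ n2 = 0%nat) as [-> ->] by lia.
  assert (Ha : (Nat.min (aa (Aof l1 l2 m)) (ad (Aof l1 l2 m)) = 0)%nat).
  { destruct (Nat.eq_dec (Nat.min (aa (Aof l1 l2 m)) (ad (Aof l1 l2 m))) 0) as [e|ne]; auto.
    exfalso. assert (1 <= 0)%nat; [|lia]. apply E1b. apply iter_e1_def. lia. }
  assert (Hb : (ab (Aof l1 l2 m) = 0)%nat).
  { destruct (Nat.eq_dec (ab (Aof l1 l2 m)) 0) as [e|ne]; auto.
    exfalso. assert (1 <= 0)%nat; [|lia]. apply E2b. apply iter_e2_def. lia. }
  unfold Aof in Ha, Hb; cbn [aa ab ad] in Ha, Hb.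
  destruct HB as (H35 & HB). unfold Hd. repeat split; try lia; try tauto.
Qed.

Theorem mainTheorem8 (l1 l2 : nat) (m : Ldat) :
  is_head l1 l2 m ->
  (forall n, inRF l1 l2 m n -> ~ inB l1 l2 n) ->
  (forall t1 t2 : nat,
      Z.of_nat t1 <= s6 l1 m + 1 ->
      Z.of_nat t2 <= Z.min (s2 l2 m) (s5 l2 m) + 1 ->
      match iterO (f2L l1 l2) t2 m with
      | Some y => iterO (f1L l1 l2) t1 y <> None
      | None => False
      end) /\
  (forall n, inRF l1 l2 m n <->
     exists (t1 t2 : nat) (y : Ldat),
       Z.of_nat t1 <= s6 l1 m + 1 /\
       Z.of_nat t2 <= Z.min (s2 l2 m) (s5 l2 m) + 1 /\
       iterO (f2L l1 l2) t2 m = Some y /\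
       iterO (f1L l1 l2) t1 y = Some n).
Proof.
  intros Hh Hno. pose proof (head_Hd _ _ _ Hh) as H.
  pose proof (s3_deco l1 l2 m H) as HS.
  assert (Hpos : forall i j n, G l1 l2 m i j = Some n -> 1 <= deco l2 m - Z.of_nat i - Z.of_nat j).
  { intros i j n Hn. destruct (G_some l1 l2 m H j i n Hn) as [-> HI].
    destruct (Z.eq_dec (deco l2 m - Z.of_nat i - Z.of_nat j) 0) as [e|ne].
    - exfalso. apply (Hno (st m i j)); [apply inRF_st|apply inB_st]; auto.
    - destruct HI as (_ & HI & _). lia. }
  assert (ClA : forall j, Z.of_nat j <= Z.min (s2 l2 m) (s5 l2 m) + 1 ->
             G l1 l2 m 0 j = Some (st m 0 j)).
  { induction j; intros Hj.
    - unfold G. simpl. rewrite (st00 l1 l2 m H). reflexivity.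
    - assert (IH := IHj ltac:(lia)).
      destruct (G_some l1 l2 m H j 0 _ IH) as [_ HI].
      pose proof (Hpos _ _ _ IH) as P.
      rewrite G_0S, IH. destruct (f2L_st l1 l2 m 0 j H HI) as [C1 C2].
      apply C2. apply C1.
      destruct (le_lt_dec (0 + 3 * j + 3) (m4 m)) as [ok|bad].
      + unf2. lia.
      + exfalso. destruct (f1L_st l1 l2 m 0 j H HI) as [D1 D2].
        assert (Hne : f1L l1 l2 (st m 0 j) <> None) by (apply D1; unf2; lia).
        assert (G l1 l2 m 1 j = Some (st m 1 j)) as G1 by (rewrite G_S, IH; auto).
        pose proof (Hpos _ _ _ G1). unf2. lia. }
  assert (ClB : forall i j, Z.of_nat j <= Z.min (s2 l2 m) (s5 l2 m) + 1 ->
             Z.of_nat i <= s6 l1 m + 1 -> G l1 l2 m i j = Some (st m i j)).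
  { induction i; intros j Hj Hi; [auto|].
    assert (IH := IHi j Hj ltac:(lia)).
    destruct (G_some l1 l2 m H j i _ IH) as [_ HI].
    pose proof (Hpos _ _ _ IH) as P.
    rewrite G_S, IH. destruct (f1L_st l1 l2 m i j H HI) as [C1 C2].
    apply C2. apply C1. unf2. lia. }
  split.
  - intros t1 t2 H1 H2. pose proof (ClB t1 t2 H2 H1) as E. unfold G in E.
    destruct (iterO (f2L l1 l2) t2 m); congruence.
  - intros n. split.
    + intros [HBn [Hwt [K [HKm HKn]]]].
      assert (K = Aof l1 l2 m).
      { destruct HKm as (a1 & a2 & X & _ & _ & EX & EY).
        destruct (iter_e2 _ _ _ EX) as [Ha2 _]. unfold Aof in Ha2; cbn [ab] in Ha2.
        assert (a2 = 0%nat) as -> by (destruct H as (_ & H5 & _); lia).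
        simpl in EX. injection EX as <-.
        destruct (iter_e1 _ _ _ EY) as [Ha1 _]. unfold Aof in Ha1; cbn [aa ad] in Ha1.
        assert (a1 = 0%nat) as -> by (destruct H as (_ & _ & Hm & _); lia).
        simpl in EY. injection EY as <-. reflexivity. }
      subst K.
      destruct HKn as (n1 & n2 & X & _ & _ & EX & EY).
      destruct (iter_e2 _ _ _ EX) as [Hn2 HX]. subst X.
      destruct (iter_e1 _ _ _ EY) as [Hn1 HY].
      cbn [aa ab ac ad ax ay az ak] in Hn1, HY.
      pose proof (f_equal aa HY) as Ea. pose proof (f_equal ab HY) as Eb.
      pose proof (f_equal ac HY) as Ec. pose proof (f_equal ad HY) as Ed.
      pose proof (f_equal ax HY) as Ex. pose proof (f_equal ay HY) as Ey.
      pose proof (f_equal az HY) as Ez.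
      unfold Aof in Ea, Eb, Ec, Ed, Ex, Ey, Ez, Hn1, Hn2.
      cbn [aa ab ac ad ax ay az ak] in Ea, Eb, Ec, Ed, Ex, Ey, Ez, Hn1, Hn2.
      unfold wt in Hwt. injection Hwt as W1 W2.
      assert (B1 : Z.of_nat n1 <= s6 l1 m + 1) by (unf2; lia).
      assert (B2 : Z.of_nat n2 <= Z.min (s2 l2 m) (s5 l2 m) + 1) by (unf2; lia).
      assert (Hn : n = st m n1 n2).
      { destruct H as (H3 & H5 & _). destruct HBn as (H35 & _).
        clear HY EY EX ClA ClB Hpos Hno Hh Ex Ey Ez B1 B2 HS W1.
        unfold st. destruct n; cbn in *. f_equal; lia. }
      pose proof (ClB n1 n2 B2 B1) as E. unfold G in E.
      destruct (iterO (f2L l1 l2) n2 m) as [y|] eqn:Ey2; [|discriminate].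
      exists n1, n2, y. repeat split; auto. rewrite E, Hn. reflexivity.
    + intros (t1 & t2 & y & _ & _ & Ey & En).
      assert (G l1 l2 m t1 t2 = Some n) as Gn by (unfold G; rewrite Ey; exact En).
      destruct (G_some l1 l2 m H t2 t1 n Gn) as [-> HI]. apply inRF_st; auto.
Qed.
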